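(* Consider the $k$-means++ seeding algorithm run for $k+\Delta$ steps on a finite set $\mathbf{X}\subset\mathbb{R}^d$ with a fixed optimal $k$-clustering $\mathcal{P}=\{P_1,\dots,P_k\}$. For any cluster $P\in\mathcal{P}$ and any $t\le k+\Delta$ such that $\Delta-M(C_t)\ge2$, $$\mathbb{E}\big[U(P,C_{k+\Delta})\mid C_t\big]\le\frac{\widetilde H_t(\mathbf{X})}{e\,(\Delta-M(C_t)-1)}.$$
   Context: For a finite $C\subset\mathbb{R}^d$, $\mathrm{cost}(x,C)=\min_{c\in C}\|x-c\|^2$, $\mathrm{cost}(\mathbf{Y},C)=\sum_{x\in\mathbf{Y}}\mathrm{cost}(x,C)$, $\mathrm{OPT}_i(\mathbf{Y})=\min_{|C|=i}\mathrm{cost}(\mathbf{Y},C)$. $k$-means++ seeding: $c_1$ uniform from $\mathbf{X}$, $C_1=\{c_1\}$; $C_{t+1}=C_t\cup\{x\}$ with $x$ chosen with probability $\mathrm{cost}(x,C_t)/\mathrm{cost}(\mathbf{X},C_t)$; centers are ordered by the time they are chosen. $P_1,\dots,P_k$ is a fixed optimal $k$-means clustering of $\mathbf{X}$. $P_i$ is covered by $C$ if $C\cap P_i\ne\varnothing$. $U(P_i,C)=\mathrm{cost}(P_i,C)$ if $P_i$ is not covered by $C$ and $0$ otherwise. A center $c\in C$ is a miss if an earlier center of $C$ lies in the same cluster $P_i$ as $c$; $M(C)$ is the number of misses. $\widetilde H_t(P_i)=\mathrm{cost}(P_i,C_{t_i})$ if $P_i$ is covered by $C_t$, where $t_i\le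 t$ is the first time $P_i$ is covered, and $\widetilde H_t(P_i)=5\,\mathrm{OPT}_1(P_i)$ otherwise; $\widetilde H_t(\mathbf{X})=\sum_i\widetilde H_t(P_i)$. *)

(* Defs.v *)
From HB Require Import structures.
From mathcomp Require Import all_boot all_order all_algebra.
From mathcomp Require Import all_classical all_reals all_analysis.
Set Implicit Arguments.
Unset Strict Implicit.
Unset Printing Implicit Defensive.
Import Order.TTheory GRing.Theory Num.Theory.
Local Open Scope ring_scope.
Local Open Scope classical_set_scope.

(* Data set X is encoded by a finite index type T and an injective embedding
   pos : T -> R^d (row vectors).  Centers are data points, i.e. elements of T;
   an ordered set of centers C_t is a sequence of elements of T. *)

Definition sqnorm (R : realType) (d : nat) (v : 'rV[R]_d) : R :=
  \sum_(j < d) v ord0 j ^+ 2.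

(* cost(x, C) = min_{c in C} ||x - c||^2 (C nonempty; 0 for empty C, never used) *)
Definition costpt (R : realType) (d : nat) (T : finType) (pos : T -> 'rV[R]_d)
    (x : T) (C : seq T) : R :=
  match C with
  | [::] => 0
  | c :: cs => foldr (fun c' m => Num.min (sqnorm (pos x - pos c')) m)
                     (sqnorm (pos x - pos c)) cs
  end.

Definition costset (R : realType) (d : nat) (T : finType) (pos : T -> 'rV[R]_d)
    (Y : pred T) (C : seq T) : R :=
  \sum_(x | Y x) costpt pos x C.

Definition OPT1 (R : realType) (d : nat) (T : finType) (pos : T -> 'rV[R]_d)
    (Y : pred T) : R :=
  inf [set r : R | exists c : 'rV[R]_d, r = \sum_(x | Y x) sqnorm (pos x - c)].

Definition cluster (T : finType) (k : nat) (P : T -> 'I_k) (i : 'I_k) : pred T :=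
  fun x => P x == i.

Definition optimal_clustering (R : realType) (d : nat) (T : finType)
    (pos : T -> 'rV[R]_d) (k : nat) (P : T -> 'I_k) : Prop :=
  forall Q : T -> 'I_k,
    \sum_(i < k) OPT1 pos (cluster P i) <= \sum_(i < k) OPT1 pos (cluster Q i).

Definition covered (T : finType) (k : nat) (P : T -> 'I_k) (i : 'I_k) (C : seq T) : bool :=
  has (fun y => P y == i) C.

Definition Uncov (R : realType) (d : nat) (T : finType) (pos : T -> 'rV[R]_d)
    (k : nat) (P : T -> 'I_k) (i : 'I_k) (C : seq T) : R :=
  if covered P i C then 0 else costset pos (cluster P i) C.

Fixpoint misses_aux (T : finType) (k : nat) (P : T -> 'I_k) (pre s : seq T) : nat :=
  match s with
  | [::] => 0%N
  | x :: s' => ((if has (fun y => P y == P x) pre then 1 else 0)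
                 + misses_aux P (rcons pre x) s')%N
  end.
Definition misses (T : finType) (k : nat) (P : T -> 'I_k) (C : seq T) : nat :=
  misses_aux P [::] C.

(* \tilde H_t(X) for C = C_t; C_{t_i} = take t_i C where t_i is the first time
   P_i is covered. *)
Definition Htilde (R : realType) (d : nat) (T : finType) (pos : T -> 'rV[R]_d)
    (k : nat) (P : T -> 'I_k) (C : seq T) : R :=
  \sum_(i < k)
    (if covered P i C
     then costset pos (cluster P i) (take (find (fun y => P y == i) C).+1 C)
     else 5 * OPT1 pos (cluster P i)).

(* one step of k-means++ seeding: probability of choosing x given the current
   centers pre.  First center uniform.  Convention if cost(X, pre) = 0
   (all points already chosen): uniform. *)
Definition step (R : realType) (d : nat) (T : finType) (pos : T -> 'rV[R]_d)
    (pre : seq T) (x : T) : R :=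
  match pre with
  | [::] => (#|T|%:R)^-1
  | _ => let tot := costset pos predT pre in
         if tot == 0 then (#|T|%:R)^-1 else costpt pos x pre / tot
  end.

Fixpoint pr_aux (R : realType) (d : nat) (T : finType) (pos : T -> 'rV[R]_d)
    (pre s : seq T) : R :=
  match s with
  | [::] => 1
  | x :: s' => step pos pre x * pr_aux pos (rcons pre x) s'
  end.

Definition seqprob (R : realType) (d : nat) (T : finType) (pos : T -> 'rV[R]_d)
    (s : seq T) : R := pr_aux pos [::] s.

Definition cond_exp (R : realType) (d : nat) (T : finType) (pos : T -> 'rV[R]_d)
    (n : nat) (f : seq T -> R) (c : seq T) : R :=
  (\sum_(s : n.-tuple T | take (size c) s == c) seqprob pos s * f s)
    / seqprob pos c.

(* Main.v *)
Require Import Defs.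
From HB Require Import structures.
From mathcomp Require Import all_boot all_order all_algebra.
From mathcomp Require Import all_classical all_reals all_analysis.
From mathcomp Require Import ring lra zify.
Import Order.TTheory GRing.Theory Num.Theory.
Local Open Scope ring_scope.
Set Implicit Arguments.
Unset Strict Implicit.
Unset Printing Implicit Defensive.

Section Cost.
Variables (R : realType) (d : nat) (T : finType) (pos : T -> 'rV[R]_d).

Definition dist (x y : T) : R := sqnorm (pos x - pos y).

Lemma sqnorm_ge0 (v : 'rV[R]_d) : 0 <= sqnorm v.
Proof. by apply: sumr_ge0 => j _; rewrite sqr_ge0. Qed.

Lemma dist_ge0 x y : 0 <= dist x y.
Proof. exact: sqnorm_ge0. Qed.

Lemma distC x y : dist x y = dist y x.
Proof.
rewrite /dist /sqnorm; apply: eq_bigr => j _; rewrite !mxE.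
by rewrite -sqrrN opprB.
Qed.

Lemma dist_tri x y z : dist x z <= 2 * dist x y + 2 * dist y z.
Proof.
rewrite /dist /sqnorm !mulr_sumr -big_split /=; apply: ler_sum => j _.
rewrite !mxE.
set a := pos x ord0 j; set b := pos y ord0 j; set c := pos z ord0 j.
have := sqr_ge0 (a - 2 * b + c); nra.
Qed.

Lemma costpt_le x C c : c \in C -> costpt pos x C <= dist x c.
Proof.
case: C => [//|c0 cs] /=.
elim: cs c0 => [|c1 cs IH] c0 /=.
  by rewrite inE => /eqP ->.
rewrite !inE => H.
have [/eqP->|] := boolP (c == c1); first by rewrite ge_min lexx.
move=> ne; rewrite ge_min; apply/orP; right.
by apply: IH; rewrite inE; move: H; rewrite (negPf ne) /=.
Qed.

Lemma costpt_ex x C : C != [::] -> exists2 c, c \in C & costpt pos x C = dist x c.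
Proof.
case: C => [//|c0 cs] _.
suff H : exists2 c, c \in c0 :: cs &
   foldr (fun c' m => Num.min (dist x c') m) (dist x c0) cs = dist x c by exact: H.
elim: cs => [|c1 cs [c Hc E]] /=.
  by exists c0; rewrite ?inE.
rewrite E /Num.min; case: ifP => _.
  by exists c1; rewrite ?inE ?eqxx ?orbT.
exists c => //; move: Hc; rewrite !inE => /orP[->|->]; by rewrite ?orbT.
Qed.

Lemma costpt_ge0 x C : 0 <= costpt pos x C.
Proof.
have [->|ne] := eqVneq C [::]; first by [].
by have [c _ ->] := costpt_ex x ne; exact: dist_ge0.
Qed.

Lemma costpt_catl x C D : C != [::] -> costpt pos x (C ++ D) <= costpt pos x C.
Proof.
move=> ne; have [c Hc ->] := costpt_ex x ne.
by apply: costpt_le; rewrite mem_cat Hc.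
Qed.

Lemma costpt_rcons x C y : C != [::] -> costpt pos x (rcons C y) <= costpt pos x C.
Proof. by move=> ne; rewrite -cats1; apply: costpt_catl. Qed.

Lemma costpt_rcons_new x C y : costpt pos x (rcons C y) <= dist x y.
Proof. by apply: costpt_le; rewrite mem_rcons inE eqxx. Qed.

Lemma costpt_tri a x C : C != [::] ->
  costpt pos a C <= 2 * costpt pos x C + 2 * dist a x.
Proof.
move=> ne; have [c Hc Hx] := costpt_ex x ne.
apply: le_trans (costpt_le a Hc) _.
rewrite Hx addrC; apply: le_trans (dist_tri a x c) _.
by rewrite distC.
Qed.

End Cost.

Lemma pointwise5 (R : realFieldType) (n Da ca S Q O : R) :
  0 < n -> 0 <= Da -> 0 <= ca -> 0 <= S -> 0 <= O ->
  ca <= S -> ca <= Q -> O <= Q -> n * Da <= 2 * S + 2 * Q ->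
  n * Da * ca <= n * O * Da + 4 * S * (Q - O).
Proof.
move=> n0 D0 c0 S0 O0 cS cQ OQ nD.
have y0 : 0 <= n * Da by rewrite mulr_ge0 // ltW.
set y := n * Da in y0 nD *.
have -> : n * O * Da = y * O by rewrite /y; ring.
have [cO|Oc] := lerP ca O.
  have : y * ca <= y * O by rewrite ler_wpM2l.
  have : 0 <= 4 * S * (Q - O) by rewrite mulr_ge0 ?mulr_ge0 // subr_ge0.
  lra.
have [QS|SQ] := lerP Q S.
  have h1 : y * (ca - O) <= (2 * S + 2 * Q) * (ca - O).
    by rewrite ler_wpM2r // subr_ge0 ltW.
  have h2 : (2 * S + 2 * Q) * (ca - O) <= (4 * S) * (Q - O).
    apply: ler_pM; first by lra. 
      by rewrite subr_ge0 ltW.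
    by lra.
    by lra.
  lra.
have h1 : y * (ca - O) <= (2 * S + 2 * Q) * (ca - O).
  by rewrite ler_wpM2r // subr_ge0 ltW.
have h2 : (2 * S + 2 * Q) * (ca - O) <= (2 * S + 2 * Q) * (S - O).
  by rewrite ler_wpM2l //; lra.
have h3 : 0 <= (S + O) * (Q - S) by rewrite mulr_ge0 //; lra.
nra.
Qed.

Lemma sum_sq_pairs (R : realFieldType) (T : finType) (A : pred T) (f : T -> R) (g : R) :
  \sum_(a | A a) \sum_(x | A x) (f x - f a) ^+ 2 <=
  2 * (\sum_(x | A x) 1) * \sum_(x | A x) (f x - g) ^+ 2.
Proof.
set n := \sum_(x | A x) (1 : R).
set s1 := \sum_(x | A x) f x.
set s2 := \sum_(x | A x) f x ^+ 2.
have L : \sum_(a | A a) \sum_(x | A x) (f x - f a) ^+ 2 = 2 * n * s2 - 2 * s1 ^+ 2.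
  have E : forall a, \sum_(x | A x) (f x - f a) ^+ 2 = s2 - 2 * f a * s1 + n * f a ^+ 2.
    move=> a; rewrite /s2 /s1 /n mulr_sumr mulr_suml -sumrN -!big_split /=.
    apply: eq_bigr => x _; ring.
  have sumc : forall c : R, \sum_(i | A i) c = n * c.
    by move=> c; rewrite /n mulr_suml; apply: eq_bigr => i _; rewrite mul1r.
  rewrite (eq_bigr _ (fun a _ => E a)) !big_split /= sumc sumrN -mulr_suml -mulr_sumr.
  rewrite -mulr_sumr -/s1 -/s2; ring.
have E2 : \sum_(x | A x) (f x - g) ^+ 2 = s2 - 2 * g * s1 + n * g ^+ 2.
  rewrite /s2 /s1 /n mulr_sumr mulr_suml -sumrN -!big_split /=.
  by apply: eq_bigr => x _; ring.
rewrite L E2.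
have := sqr_ge0 (s1 - n * g).
nra.
Qed.

Section Five.
Variables (R : realType) (d : nat) (T : finType) (pos : T -> 'rV[R]_d).

Lemma OPT1_le (A : pred T) (c : 'rV[R]_d) :
  OPT1 pos A <= \sum_(x | A x) sqnorm (pos x - c).
Proof.
apply: ge_inf; last by exists c.
exists 0 => y [c' ->]; apply: sumr_ge0 => x _; exact: sqnorm_ge0.
Qed.

Lemma OPT1_lb (A : pred T) z :
  (forall c : 'rV[R]_d, z <= \sum_(x | A x) sqnorm (pos x - c)) -> z <= OPT1 pos A.
Proof.
move=> H; apply: lb_le_inf; first by exists (\sum_(x | A x) sqnorm (pos x - 0)); exists 0.
by move=> y [c ->].
Qed.

Lemma OPT1_ge0 (A : pred T) : 0 <= OPT1 pos A.
Proof. apply: OPT1_lb => c; apply: sumr_ge0 => x _; exact: sqnorm_ge0. Qed.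

Lemma sumQ_le (A : pred T) :
  \sum_(a | A a) \sum_(x | A x) dist pos x a <=
  2 * (\sum_(x | A x) (1 : R)) * OPT1 pos A.
Proof.
set n := \sum_(x | A x) (1 : R).
have n0 : 0 <= n by apply: sumr_ge0.
have key : forall c : 'rV[R]_d, \sum_(a | A a) \sum_(x | A x) dist pos x a <=
    2 * n * \sum_(x | A x) sqnorm (pos x - c).
  move=> c; rewrite /dist /sqnorm.
  under eq_bigr do rewrite exchange_big /=.
  rewrite [X in X <= _]exchange_big /= [X in _ <= _ * X]exchange_big /= mulr_sumr.
  apply: ler_sum => j _.
  under eq_bigr do under eq_bigr do rewrite !mxE.
  under [X in _ <= _ * X]eq_bigr do rewrite !mxE.
  exact: (sum_sq_pairs A (fun x => pos x ord0 j) (c ord0 j)).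
have [nz|npos] := eqVneq n 0.
  have : \sum_(a | A a) \sum_(x | A x) dist pos x a <= 0.
    by have := key 0; rewrite nz mulr0 mul0r.
  by rewrite nz mulr0 mul0r.
have n2 : 0 < 2 * n by rewrite mulr_gt0 // lt0r npos.
rewrite -ler_pdivrMl //; apply: OPT1_lb => c.
by rewrite ler_pdivrMl //; exact: key.
Qed.

Lemma five (A : pred T) (C : seq T) : C != [::] ->
  \sum_(a | A a) costpt pos a C * costset pos A (rcons C a) <=
  5 * OPT1 pos A * costset pos A C.
Proof.
move=> ne.
set S := costset pos A C.
set n := \sum_(x | A x) (1 : R).
set O := OPT1 pos A.
pose Q a := \sum_(x | A x) dist pos x a.
have S0 : 0 <= S by apply: sumr_ge0 => x _; exact: costpt_ge0.
have O0 : 0 <= O by exact: OPT1_ge0.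
have OQ : forall a, O <= Q a by move=> a; exact: OPT1_le.
have cS : forall a, costset pos A (rcons C a) <= S.
  by move=> a; apply: ler_sum => x _; exact: costpt_rcons.
have cQ : forall a, costset pos A (rcons C a) <= Q a.
  by move=> a; apply: ler_sum => x _; exact: costpt_rcons_new.
have c0 : forall a, 0 <= costset pos A (rcons C a).
  by move=> a; apply: sumr_ge0 => x _; exact: costpt_ge0.
have nD : forall a, n * costpt pos a C <= 2 * S + 2 * Q a.
  move=> a; rewrite /n mulr_suml /S /Q /costset !mulr_sumr -big_split /=.
  apply: ler_sum => x _; rewrite mul1r distC; exact: costpt_tri.
have [x0 Ax0|noA] := pickP A; last first.
  rewrite big_pred0 // mulr_ge0 // mulr_ge0 //.
have npos : 0 < n.
  rewrite /n (bigD1 x0) //= ltr_pwDl // ?ltr01 //.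
  by apply: sumr_ge0.
rewrite -(ler_pM2l npos) mulr_sumr.
have H : forall a, n * (costpt pos a C * costset pos A (rcons C a)) <=
    n * O * costpt pos a C + 4 * S * (Q a - O).
  move=> a; rewrite mulrA; apply: pointwise5 => //; exact: costpt_ge0.
apply: le_trans (ler_sum _ (fun a _ => H a)) _.
rewrite big_split /= -mulr_sumr -mulr_sumr sumrB.
have -> : \sum_(a | A a) O = n * O by rewrite /n mulr_suml; apply: eq_bigr => a _; rewrite mul1r.
have := sumQ_le A; rewrite -/n -/O => HQ.
have : 4 * S * (\sum_(a | A a) Q a - n * O) <= 4 * S * (n * O).
  rewrite ler_wpM2l ?mulr_ge0 //. lra.
rewrite -/S => h.
apply: le_trans (lerD (lexx _) h) _.
have -> : \sum_(i | A i) costpt pos i C = S by [].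
rewrite le_eqVlt; apply/orP; left; apply/eqP; ring.
Qed.

End Five.

Section Comb.
Variables (R : realType) (d : nat) (T : finType) (pos : T -> 'rV[R]_d).
Variables (k : nat) (P : T -> 'I_k).

Lemma covered_map j C : Defs.covered P j C = (j \in map P C).
Proof.
rewrite -has_pred1 has_map /covered; apply: eq_has => y /=.
by rewrite /preim /= eq_sym.
Qed.

Lemma covered_rcons j C x : Defs.covered P j (rcons C x) = (P x == j) || Defs.covered P j C.
Proof. by rewrite /covered has_rcons. Qed.

Lemma misses_aux_rcons pre s x :
  misses_aux P pre (rcons s x) =
  (misses_aux P pre s + has (fun y => P y == P x) (pre ++ s))%N.
Proof.
elim: s pre => [|y s IH] pre /=.
  by rewrite cats0 addn0; case: has.
by rewrite IH cat_rcons addnA.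
Qed.

Lemma misses_rcons C x :
  misses P (rcons C x) = (misses P C + Defs.covered P (P x) C)%N.
Proof. by rewrite /misses misses_aux_rcons. Qed.

Lemma misses_count_aux pre s :
  (misses_aux P pre s + #|map P (pre ++ s)| = #|map P pre| + size s)%N.
Proof.
elim: s pre => [|y s IH] pre /=; first by rewrite cats0 addn0.
have := IH (rcons pre y); rewrite cat_rcons => E.
have Hc : #|map P (rcons pre y)| = ((P y \notin map P pre) + #|map P pre|)%N.
  rewrite -cardU1; apply: eq_card => j; rewrite map_rcons mem_rcons inE.
  by [].
have Hh : has (fun z => P z == P y) pre = (P y \in map P pre).
  by rewrite -covered_map.
rewrite Hh; move: E; rewrite Hc.
by case: (P y \in map P pre) => /=; lia.
Qed.

Lemma misses_count C : (misses P C + #|map P C| = size C)%N.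
Proof. by have := misses_count_aux [::] C; rewrite /= card0. Qed.

Lemma misses_uncovered (i : 'I_k) C : ~~ Defs.covered P i C ->
  (size C <= misses P C + k.-1)%N.
Proof.
rewrite covered_map => ni.
have : (#|map P C| <= #|predC1 i|)%N.
  have sub : map P C \subset predC1 i.
    by apply/fintype.subsetP => j jin; rewrite inE; apply: contraNneq ni => <-.
  exact: subset_leq_card sub.
rewrite cardC1 card_ord; have := misses_count C; lia.
Qed.

Definition hterm j C : R :=
  if Defs.covered P j C
  then costset pos (Defs.cluster P j) (take (find (fun y => P y == j) C).+1 C)
  else 5 * OPT1 pos (Defs.cluster P j).

Lemma HtildeE C : Htilde pos P C = \sum_(j < k) hterm j C.
Proof. by []. Qed.

Lemma hterm_cov j C x : Defs.covered P j C -> hterm j (rcons C x) = hterm j C.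
Proof.
move=> cv; rewrite /hterm covered_rcons cv orbT.
have hf : has (fun y => P y == j) C by [].
rewrite -cats1 find_cat hf takel_cat //.
by move: hf; rewrite has_find.
Qed.

Lemma hterm_unc_ne j C x : ~~ Defs.covered P j C -> P x != j ->
  hterm j (rcons C x) = hterm j C.
Proof.
by move=> /negPf cv /negPf ne; rewrite /hterm covered_rcons cv ne.
Qed.

Lemma hterm_unc_eq j C x : ~~ Defs.covered P j C -> P x == j ->
  hterm j (rcons C x) = costset pos (Defs.cluster P j) (rcons C x).
Proof.
move=> cv e; rewrite /hterm covered_rcons e /=.
have hf : has (fun y => P y == j) C = false by apply/negbTE.
rewrite -cats1 find_cat hf /= e addn0 take_oversize //.
by rewrite size_cat /= addn1.
Qed.

Lemma costset_ge0 (A : pred T) C : 0 <= costset pos A C.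
Proof. by apply: sumr_ge0 => x _; exact: costpt_ge0. Qed.

Lemma hterm_ge0 j C : 0 <= hterm j C.
Proof.
rewrite /hterm; case: ifP => _; first exact: costset_ge0.
by rewrite mulr_ge0 // OPT1_ge0.
Qed.

Lemma Htilde_ge0 C : 0 <= Htilde pos P C.
Proof. by rewrite HtildeE; apply: sumr_ge0 => j _; exact: hterm_ge0. Qed.

Lemma Htilde_cov C x : Defs.covered P (P x) C -> Htilde pos P (rcons C x) = Htilde pos P C.
Proof.
move=> cv; rewrite !HtildeE; apply: eq_bigr => j _.
have [cj|ncj] := boolP (Defs.covered P j C); first exact: hterm_cov.
apply: hterm_unc_ne => //; apply: contraNneq ncj => <-; exact: cv.
Qed.

Lemma Htilde_unc C x : ~~ Defs.covered P (P x) C ->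
  Htilde pos P (rcons C x) = Htilde pos P C - 5 * OPT1 pos (Defs.cluster P (P x))
     + costset pos (Defs.cluster P (P x)) (rcons C x).
Proof.
move=> ncv; rewrite !HtildeE (bigD1 (P x)) //= [in RHS](bigD1 (P x)) //=.
rewrite hterm_unc_eq // {2}/hterm (negPf ncv).
have -> : \sum_(j < k | j != P x) hterm j (rcons C x) = \sum_(j < k | j != P x) hterm j C.
  apply: eq_bigr => j ne.
  have [cj|ncj] := boolP (Defs.covered P j C); first exact: hterm_cov.
  by apply: hterm_unc_ne => //; rewrite eq_sym.
ring.
Qed.

Lemma costset_le_hterm j C : C != [::] -> Defs.covered P j C ->
  costset pos (Defs.cluster P j) C <= hterm j C.
Proof.
move=> ne cv; rewrite /hterm cv; apply: ler_sum => x _.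
rewrite -{1}(cat_take_drop (find (fun y => P y == j) C).+1 C).
apply: costpt_catl.
by case: C ne {cv}.
Qed.

Variable (i : 'I_k).

Lemma Uncov_ge0 C : 0 <= Uncov pos P i C.
Proof. rewrite /Uncov; case: ifP => _ //; exact: costset_ge0. Qed.

Lemma Uncov_rcons C x : C != [::] -> Uncov pos P i (rcons C x) <= Uncov pos P i C.
Proof.
move=> ne; rewrite /Uncov covered_rcons.
case: (P x == i) => /=; first by case: ifP => _ //; exact: costset_ge0.
case: ifP => _ //; apply: ler_sum => y _; exact: costpt_rcons.
Qed.

Lemma Uncov_hit C x : P x == i -> Uncov pos P i (rcons C x) = 0.
Proof. by move=> e; rewrite /Uncov covered_rcons e. Qed.

End Comb.

Section Lines.
Variables (R : realType) (L0 Dl : nat).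

Definition uu : R := (L0.+1)%:R.
Definition pp : R := L0%:R / uu.
Definition alpha (j : nat) : R := pp ^+ j.+1 * (L0%:R - j%:R) / uu.
Definition beta (j : nat) : R := (j.+1)%:R * pp ^+ j / uu ^+ 2.
Definition lA (M : nat) : R := if (M <= Dl)%N then alpha (Dl - M) else 1.
Definition lB (M : nat) : R := if (M <= Dl)%N then beta (Dl - M) else 0.

Lemma uu_gt0 : 0 < uu. Proof. by rewrite /uu ltr0n. Qed.
Lemma uu_neq0 : uu != 0. Proof. by rewrite gt_eqF // uu_gt0. Qed.
Lemma pp_ge0 : 0 <= pp. Proof. by rewrite /pp divr_ge0 // ltW // uu_gt0. Qed.
Lemma uuE : uu = L0%:R + 1. Proof. by rewrite /uu -addn1 natrD. Qed.
Lemma ppE : pp * uu = L0%:R. Proof. by rewrite /pp divfK // uu_neq0. Qed.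

Lemma alpha_ge0 j : (j <= L0)%N -> 0 <= alpha j.
Proof.
move=> jL; rewrite /alpha divr_ge0 ?(ltW uu_gt0) // mulr_ge0 ?exprn_ge0 ?pp_ge0 //.
by rewrite subr_ge0 ler_nat.
Qed.

Lemma beta_ge0 j : 0 <= beta j.
Proof.
by rewrite /beta divr_ge0 ?exprn_ge0 ?(ltW uu_gt0) // mulr_ge0 ?exprn_ge0 ?pp_ge0.
Qed.

Lemma lA_ge0 M : (Dl <= L0 + M)%N -> 0 <= lA M.
Proof. by move=> h; rewrite /lA; case: ifP => // _; apply: alpha_ge0; lia. Qed.

Lemma lB_ge0 M : 0 <= lB M.
Proof. by rewrite /lB; case: ifP => // _; apply: beta_ge0. Qed.

Lemma step_identity j (U H : R) :
  (U + H) * (alpha j.+1 * U + beta j.+1 * H) - H * (alpha j * U + beta j * H)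
  = (pp ^+ j * (L0%:R - j%:R - 1) / uu) * (pp * U - H / uu) ^+ 2.
Proof.
have e1 : (j.+1)%:R = j%:R + 1 :> R by rewrite -addn1 natrD.
have e2 : (j.+2)%:R = j%:R + 2 :> R by rewrite -addn2 natrD.
rewrite /alpha /beta !exprS e1 e2.
set q := pp ^+ j.
have un := uu_neq0.
rewrite /pp uuE.
have hL : L0%:R + 1 != 0 :> R by rewrite -uuE.
field.
by [].
Qed.

Lemma base_identity (U H : R) :
  (U + H) * (alpha 0 * U + beta 0 * H) - H * U = (pp * U - H / uu) ^+ 2.
Proof.
rewrite /alpha /beta /= expr1 expr0 subr0.
rewrite /pp uuE.
have hL : L0%:R + 1 != 0 :> R by rewrite -uuE uu_neq0.
by field.
Qed.

Lemma line_step M (U H : R) : (Dl <= L0 + M)%N -> 0 <= U -> 0 <= H ->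
  H * (lA M.+1 * U + lB M.+1 * H) <= (U + H) * (lA M * U + lB M * H).
Proof.
move=> hM U0 H0; rewrite /lA /lB.
case: (ltnP M Dl) => hMD.
  rewrite (ltnW hMD).
  have -> : (Dl - M = (Dl - M.+1).+1)%N by lia.
  rewrite -subr_ge0 step_identity; apply: mulr_ge0; last exact: sqr_ge0.
  rewrite divr_ge0 ?(ltW uu_gt0) // mulr_ge0 ?exprn_ge0 ?pp_ge0 //.
  rewrite -addrA -opprD natr1 subr_ge0 ler_nat; lia.
case: (leqP M Dl) => hMD2.
  have -> : M = Dl by apply/eqP; rewrite eqn_leq hMD hMD2.
  rewrite /= subnn mul1r mul0r addr0 -subr_ge0 base_identity; exact: sqr_ge0.
rewrite /= !mul0r !addr0 !mul1r; nra.
Qed.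

Lemma line_W M (U H W : R) : (Dl <= L0 + M)%N -> 0 <= U -> 0 <= W -> W <= H ->
  W * (lA M.+1 * U + lB M.+1 * H) <= (U + W) * (lA M * U + lB M * H).
Proof.
move=> hM U0 W0 WH.
have H0 : 0 <= H by apply: le_trans WH.
have hM1 : (Dl <= L0 + M.+1)%N by lia.
set X := lA M.+1 * U + lB M.+1 * H.
set Y := lA M * U + lB M * H.
have X0 : 0 <= X by rewrite addr_ge0 // mulr_ge0 // ?lA_ge0 ?lB_ge0.
have Y0 : 0 <= Y by rewrite addr_ge0 // mulr_ge0 // ?lA_ge0 ?lB_ge0.
have key := line_step hM U0 H0; rewrite -/X -/Y in key.
have [UH0|UHpos] := eqVneq (U + H) 0.
  have U00 : U = 0 by lra.
  have H00 : H = 0 by lra.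
  have W00 : W = 0 by lra.
  by rewrite W00 mul0r addr0 mulr_ge0.
have UHp : 0 < U + H by rewrite lt0r UHpos /=; lra.
rewrite -(ler_pM2l UHp).
have h1 : (U + H) * (W * X) <= (U + W) * (H * X).
  have : W * (U + H) <= H * (U + W) by nra.
  move=> h; rewrite mulrA [(U + H) * W]mulrC mulrA [(U + W) * H]mulrC.
  by rewrite ler_wpM2r.
apply: le_trans h1 _.
rewrite [X in _ <= X]mulrCA ler_wpM2l //; lra.
Qed.

Lemma lA_start : (Dl - L0 <= Dl)%N -> (L0 <= Dl)%N -> lA (Dl - L0) = 0.
Proof.
move=> _ h; rewrite /lA leq_subr.
have -> : (Dl - (Dl - L0) = L0)%N by lia.
by rewrite /alpha subrr mulr0 mul0r.
Qed.

Lemma lB_start : (L0 <= Dl)%N -> lB (Dl - L0) = pp ^+ L0 / uu.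
Proof.
move=> h; rewrite /lB leq_subr.
have -> : (Dl - (Dl - L0) = L0)%N by lia.
have := uu_neq0; rewrite /beta /uu => h0.
by field.
Qed.

Lemma final_bound : (2 <= L0)%N ->
  pp ^+ L0 / uu <= (expR 1 * (L0.-1)%:R)^-1.
Proof.
move=> hL.
have un := uu_gt0.
have L1 : 0 < (L0.-1)%:R :> R by rewrite ltr0n; lia.
have e1 : expR 1 * pp ^+ L0.+1 <= 1.
  have hp : pp <= expR (- uu^-1).
    apply: le_trans (expR_ge1Dx _).
    rewrite /pp uuE.
    have hL' : L0%:R + 1 != 0 :> R by rewrite -uuE uu_neq0.
    rewrite le_eqVlt; apply/orP; left; apply/eqP; field; exact: hL'.
  have : pp ^+ L0.+1 <= expR (- uu^-1) ^+ L0.+1.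
    by apply: lerXn2r; rewrite ?nnegrE ?pp_ge0 ?expR_ge0.
  rewrite -expRM_natl mulrN -/uu mulfV ?uu_neq0 // => h.
  have h1 : 0 < expR (1 : R) by apply: expR_gt0.
  apply: le_trans (ler_wpM2l (ltW h1) h) _.
  by rewrite expRxMexpNx_1.
rewrite -[X in _ <= X]div1r ler_pdivlMr ?mulr_gt0 ?expR_gt0 //.
have L0p : 0 < L0%:R :> R by rewrite ltr0n; lia.
have E : pp ^+ L0 / uu * (expR 1 * (L0.-1)%:R) =
    expR 1 * pp ^+ L0.+1 * ((L0.-1)%:R / L0%:R).
  rewrite exprS; set q := pp ^+ L0.
  have h0 := uu_neq0; have h2 : L0%:R != 0 :> R by rewrite gt_eqF.
  rewrite /pp; field; by rewrite h2 addrC -uuE h0.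
rewrite E.
have h3 : (L0.-1)%:R / L0%:R <= 1 :> R.
  by rewrite ler_pdivrMr // mul1r ler_nat; lia.
have h4 : 0 <= (L0.-1)%:R / L0%:R :> R by rewrite divr_ge0 // ltW.
apply: le_trans (ler_wpM2r h4 e1) _; by rewrite mul1r.
Qed.

End Lines.

Section Main.
Variables (R : realType) (d : nat) (T : finType) (pos : T -> 'rV[R]_d).
Variables (k : nat) (P : T -> 'I_k) (i : 'I_k).

Fixpoint Ex (m : nat) (C : seq T) : R :=
  if m is m'.+1 then \sum_x Defs.step pos C x * Ex m' (rcons C x)
  else Uncov pos P i C.

Lemma rcons_neq0 (C : seq T) x : rcons C x != [::].
Proof. by case: C. Qed.

Lemma Ex_zero m C : C != [::] -> Uncov pos P i C = 0 -> Ex m C = 0.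
Proof.
elim: m C => [|m IH] C ne U0 /=; first by [].
apply: big1 => x _; rewrite IH ?mulr0 ?rcons_neq0 //.
apply/eqP; rewrite eq_le Uncov_ge0 andbT -U0; exact: Uncov_rcons.
Qed.

Lemma sum_ite (F G : 'I_k -> R) (c : pred 'I_k) : c i = false ->
  \sum_(j < k) (if j == i then F j else if c j then G j else 0) =
  F i + \sum_(j < k | c j) G j.
Proof.
move=> ci; rewrite (bigD1 i) //= eqxx; congr (_ + _).
rewrite big_mkcond [RHS]big_mkcond; apply: eq_bigr => j _.
by case: (eqVneq j i) => [->|] /=; rewrite ?ci.
Qed.

Lemma tot_split C :
  costset pos predT C = \sum_(j < k) costset pos (Defs.cluster P j) C.
Proof.
by rewrite /costset (partition_big P predT) //=.
Qed.

Variables (Dl L0 : nat).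

Notation LA := (@lA R L0 Dl).
Notation LB := (@lB R L0 Dl).

Lemma main_ind m : forall C, C != [::] -> (size C + m = k + Dl)%N ->
  (Dl <= L0 + misses P C)%N ->
  Ex m C <= LA (misses P C) * Uncov pos P i C + LB (misses P C) * Htilde pos P C.
Proof.
have k0 : (0 < k)%N by case: (k) i => // [[]].
elim: m => [|m IH] C ne hs hM.
  rewrite /=.
  have [cv|ncv] := boolP (Defs.covered P i C).
    rewrite /Uncov cv mulr0 add0r; apply: mulr_ge0; [exact: lB_ge0|exact: Htilde_ge0].
  have := misses_uncovered ncv; rewrite addn0 in hs; rewrite hs => hmis.
  rewrite /lA /lB.
  have -> : (misses P C <= Dl)%N = false by apply/negbTE; rewrite -ltnNge; lia.
  by rewrite mul1r mul0r addr0.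
set M := misses P C; set U := Uncov pos P i C; set H := Htilde pos P C.
have [U0|Unz] := eqVneq U 0.
  rewrite Ex_zero // U0 mulr0 add0r; apply: mulr_ge0; [exact: lB_ge0|exact: Htilde_ge0].
have ncv : ~~ Defs.covered P i C.
  by apply: contra Unz => cv; rewrite /U /Uncov cv.
have UE : U = costset pos (Defs.cluster P i) C by rewrite /U /Uncov (negPf ncv).
have Upos : 0 < U by rewrite lt0r Unz Uncov_ge0.
set S := fun j => costset pos (Defs.cluster P j) C.
set tot := costset pos predT C.
have totE : tot = \sum_(j < k) S j by rewrite /tot tot_split.
have S0 : forall j, 0 <= S j by move=> j; exact: costset_ge0.
have totU : U <= tot.
  rewrite totE (bigD1 i) //= UE -/(S i) lerDl; apply: sumr_ge0 => j _; exact: S0.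
have totpos : 0 < tot by apply: lt_le_trans totU.
have stepE : forall x, Defs.step pos C x = costpt pos x C / tot.
  move=> x; rewrite /Defs.step; case E: C ne => [//|c0 cs] _.
  by rewrite -E -/tot (negPf (lt0r_neq0 totpos)).
set Ln := LA M * U + LB M * H.
set Lp := LA M.+1 * U + LB M.+1 * H.
pose G x := if P x == i then 0 else if Defs.covered P (P x) C then Lp
  else LA M * U + LB M * (H - 5 * OPT1 pos (Defs.cluster P (P x))
                          + costset pos (Defs.cluster P (P x)) (rcons C x)).
have hMs : (Dl <= L0 + M.+1)%N by rewrite /M; lia.
have EG : forall x, Ex m (rcons C x) <= G x.
  move=> x.
  have hsx : (size (rcons C x) + m = k + Dl)%N by rewrite size_rcons -hs addSnnS.
  have Ux : Uncov pos P i (rcons C x) <= U by exact: Uncov_rcons.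
  rewrite /G; case: ifP => hxi.
    by rewrite Ex_zero ?rcons_neq0 // Uncov_hit.
  case: ifP => cvx.
    have mx : misses P (rcons C x) = M.+1 by rewrite misses_rcons cvx addn1.
    have := IH _ (rcons_neq0 C x) hsx; rewrite mx Htilde_cov ?cvx // => /(_ hMs) h.
    apply: le_trans h _; rewrite lerD2r ler_wpM2l //; exact: lA_ge0.
  have mx : misses P (rcons C x) = M by rewrite misses_rcons cvx addn0.
  have := IH _ (rcons_neq0 C x) hsx; rewrite mx.
  rewrite Htilde_unc; last by rewrite cvx.
  rewrite -/H => /(_ hM) h.
  apply: le_trans h _; rewrite lerD2r ler_wpM2l //; exact: lA_ge0.
rewrite /= (eq_bigr _ (fun x _ => congr1 (fun z => z * _) (stepE x))).
have -> : \sum_x costpt pos x C / tot * Ex m (rcons C x) =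
    (\sum_x costpt pos x C * Ex m (rcons C x)) / tot.
  by rewrite mulr_suml; apply: eq_bigr => x _; rewrite mulrAC.
rewrite ler_pdivrMr // [_ * tot]mulrC.
have step1 : \sum_x costpt pos x C * Ex m (rcons C x) <= \sum_x costpt pos x C * G x.
  by apply: ler_sum => x _; rewrite ler_wpM2l ?costpt_ge0 ?EG.
apply: le_trans step1 _.
rewrite (partition_big P predT) //=.
pose Z j := if j == i then S j * Ln else if Defs.covered P j C then S j * (Ln - Lp) else 0.
have Tj : forall j : 'I_k, \sum_(x | true && (P x == j)) costpt pos x C * G x <= S j * Ln - Z j.
  move=> j; rewrite /Z.
  have SjE : S j = \sum_(x | true && (P x == j)) costpt pos x C by [].
  case: (eqVneq j i) => [->|nji].
    rewrite subrr big1 // => x /eqP hx; rewrite /G hx eqxx mulr0 //.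
  case cj: (Defs.covered P j C).
    rewrite (eq_bigr (fun x => costpt pos x C * Lp)); last first.
      by move=> x /eqP hx; rewrite /G hx (negPf nji) cj.
    by rewrite -mulr_suml -SjE le_eqVlt; apply/orP; left; apply/eqP; ring.
  rewrite subr0.
  set c := fun x => costset pos (Defs.cluster P j) (rcons C x).
  set O := OPT1 pos (Defs.cluster P j).
  rewrite (eq_bigr (fun x => costpt pos x C * Ln + LB M * (costpt pos x C * c x - 5 * O * costpt pos x C))); last first.
    move=> x /eqP hx; rewrite /G hx (negPf nji) cj /c /O /Ln; ring.
  rewrite big_split /= -mulr_suml -mulr_sumr sumrB -mulr_sumr -SjE gerDl.
  rewrite mulr_ge0_le0 ?lB_ge0 // subr_le0.
  have := five pos (Defs.cluster P j) ne.
  by rewrite -/O.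
apply: le_trans (ler_sum _ (fun j _ => Tj j)) _.
rewrite sumrB -mulr_suml -totE gerDl oppr_le0.
have hsum : \sum_(j < k) Z j = S i * Ln + \sum_(j < k | Defs.covered P j C) S j * (Ln - Lp).
  by rewrite /Z sum_ite //; apply/negbTE.
have SiU : S i = U by rewrite UE.
rewrite hsum -mulr_suml SiU.
set W := \sum_(j < k | Defs.covered P j C) S j.
have W0 : 0 <= W by apply: sumr_ge0.
have WH : W <= H.
  rewrite /H HtildeE [X in _ <= X](bigID (fun j => Defs.covered P j C)) /= -[W]addr0.
  apply: lerD.
    apply: ler_sum => j cj; exact: costset_le_hterm.
  by apply: sumr_ge0 => j _; exact: hterm_ge0.
have := line_W hM (ltW Upos) W0 WH; rewrite -/Lp -/Ln -/M.
move=> h; lra.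
Qed.

End Main.

Section Tup.
Variables (R : realType) (T : finType).

Definition tsplit n (t : n.+1.-tuple T) : n.-tuple T * T :=
  (belast_tuple (thead t) (behead_tuple t), last (thead t) (behead t)).

Definition tjoin n (p : n.-tuple T * T) : n.+1.-tuple T := rcons_tuple p.1 p.2.

Lemma tuple_headE n (t : n.+1.-tuple T) : val t = thead t :: behead t.
Proof. by case: t => [[|a l] //= sz]. Qed.

Lemma tjoinK n : cancel (@tsplit n) (@tjoin n).
Proof.
move=> t; apply: val_inj => /=.
by rewrite [RHS]tuple_headE lastI.
Qed.

Lemma tsplitK n : cancel (@tjoin n) (@tsplit n).
Proof.
move=> [s x]; rewrite /tsplit.
have E := tuple_headE (tjoin (s, x)).
have : rcons (val s) x = rcons (belast (thead (tjoin (s, x))) (behead (tjoin (s, x))))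
                        (last (thead (tjoin (s, x))) (behead (tjoin (s, x)))).
  by rewrite -lastI -E.
move=> /rcons_inj [e1 e2].
congr (_, _); last by [].
by apply: val_inj; rewrite /= -e1.
Qed.

Lemma sum_tuple_rcons n (F : seq T -> R) :
  \sum_(s : n.+1.-tuple T) F s = \sum_(s : n.-tuple T) \sum_(x : T) F (rcons s x).
Proof.
rewrite pair_big /= (reindex (@tjoin n)) /=; last first.
  by exists (@tsplit n) => p _; [exact: tsplitK | exact: tjoinK].
by [].
Qed.

Fixpoint Hs (m : nat) (g : seq T -> R) (c : seq T) : R :=
  if m is m'.+1 then \sum_x Hs m' g (rcons c x) else g c.

Lemma Hs_shift m g c : Hs m.+1 g c = Hs m (fun s => \sum_x g (rcons s x)) c.
Proof.
elim: m c => [|m IH] c //=.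
by apply: eq_bigr => x _; rewrite -IH.
Qed.

Lemma prefix_base t (c : t.-tuple T) (g : seq T -> R) :
  \sum_(s : t.-tuple T | take t s == c) g s = g c.
Proof.
rewrite (big_pred1 c) // => s /=; rewrite take_oversize ?size_tuple //.
Qed.

Lemma prefix_sum t (c : t.-tuple T) n (g : seq T -> R) : (t <= n)%N ->
  \sum_(s : n.-tuple T | take t s == c) g s = Hs (n - t) g c.
Proof.
elim: n g => [|n IH] g ht.
  have t0 : t = 0%N by lia.
  subst t; rewrite prefix_base; by [].
have [tn|tn] := eqVneq t n.+1.
  subst t; rewrite prefix_base subnn; by [].
have htn : (t <= n)%N by lia.
rewrite big_mkcond (sum_tuple_rcons n (fun s : seq T => if take t s == c then g s else 0)).
have -> : (n.+1 - t = (n - t).+1)%N by lia.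
rewrite Hs_shift -IH //.
rewrite [RHS]big_mkcond; apply: eq_bigr => s _.
have E : forall x, take t (rcons s x) = take t s.
  by move=> x; rewrite -cats1 takel_cat // size_tuple.
by case: ifP => h; [apply: eq_bigr => x _; rewrite E h | apply: big1 => x _; rewrite E h].
Qed.

End Tup.

Section Prob.
Variables (R : realType) (d : nat) (T : finType) (pos : T -> 'rV[R]_d).

Lemma pr_aux_rcons pre s x :
  pr_aux pos pre (rcons s x) = pr_aux pos pre s * Defs.step pos (pre ++ s) x.
Proof.
elim: s pre => [|y s IH] pre /=; first by rewrite mulr1 mul1r cats0.
by rewrite IH cat_rcons mulrA.
Qed.

Lemma seqprob_rcons s x : seqprob pos (rcons s x) = seqprob pos s * Defs.step pos s x.
Proof. by rewrite /seqprob pr_aux_rcons. Qed.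

Lemma Hs_prob (f : seq T -> R) (E : nat -> seq T -> R) :
  (forall c, E 0%N c = f c) ->
  (forall m c, E m.+1 c = \sum_x Defs.step pos c x * E m (rcons c x)) ->
  forall m c, Hs m (fun s => seqprob pos s * f s) c = seqprob pos c * E m c.
Proof.
move=> E0 ES; elim=> [|m IH] c /=; first by rewrite E0.
rewrite ES mulr_sumr; apply: eq_bigr => x _.
by rewrite IH seqprob_rcons mulrA.
Qed.

Lemma cond_exp_E t (c : t.-tuple T) N (f : seq T -> R) (E : nat -> seq T -> R) :
  (forall c, E 0%N c = f c) ->
  (forall m c, E m.+1 c = \sum_x Defs.step pos c x * E m (rcons c x)) ->
  (t <= N)%N -> seqprob pos c != 0 ->
  cond_exp pos N f c = E (N - t)%N c.
Proof.
move=> E0 ES tN nz.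
rewrite /cond_exp size_tuple (prefix_sum c (fun s => seqprob pos s * f s)) // (Hs_prob E0 ES) mulrC mulKf //.
Qed.

End Prob.

Unset Implicit Arguments.

Theorem mainTheorem7 (R : realType) (d k Delta t : nat) (T : finType)
    (pos : T -> 'rV[R]_d) (P : T -> 'I_k) (i : 'I_k) (c : t.-tuple T) :
  injective pos ->
  optimal_clustering pos P ->
  (1 <= t)%N -> (t <= k + Delta)%N ->
  0 < seqprob pos c ->
  (misses P c + 2 <= Delta)%N ->
  cond_exp pos (k + Delta) (Uncov pos P i) c
    <= Htilde pos P c / (expR 1 * (Delta - misses P c - 1)%:R).
Proof.
move=> _ _ t1 tN prpos hmis.
rewrite (@cond_exp_E R d T pos t c (k + Delta) (Uncov pos P i) (Ex pos P i)) //;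
  last exact: lt0r_neq0.
set L0 := (Delta - misses P c)%N.
have cne : (c : seq T) != [::] by rewrite -size_eq0 size_tuple; lia.
have h := @main_ind R d T pos k P i Delta L0 (k + Delta - t)%N c cne.
have h2 : (size c + (k + Delta - t) = k + Delta)%N by rewrite size_tuple; lia.
have h3 : (Delta <= L0 + misses P c)%N by rewrite /L0; lia.
have {h h2 h3} := h h2 h3.
have eM : misses P c = (Delta - L0)%N by rewrite /L0; lia.
have hL : (L0 <= Delta)%N by rewrite /L0 leq_subr.
rewrite eM (@lA_start R L0 Delta) ?leq_subr // (@lB_start R L0 Delta) //.
rewrite mul0r add0r => h.
apply: le_trans h _.
have -> : (Delta - misses P c - 1 = L0.-1)%N by rewrite /L0; lia.
rewrite mulrC ler_wpM2l ?Htilde_ge0 //.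
apply: final_bound; lia.
Qed.
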